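(* Let $m\in\mathbb{N}$ and let $X=\{a_1,\dots,a_n\}\subset\mathbb{R}^m$ be a finite point cloud with at least two points, equipped with the Euclidean metric $d_X$. Let $\rho_{\mathrm{UTD}}:X\to\mathcal{S}(\mathbb{C}^{m+1})$ be the uniformly transformed diagonal encoding $\rho_{\mathrm{UTD}}(x)=\sum_{j=1}^{m+1}\mathcal{T}_X(x)_j\,|j\rangle\langle j|$. Then for all $x,y\in X$, $$d_{\mathrm{HS}}\big(\rho_{\mathrm{UTD}}(x),\rho_{\mathrm{UTD}}(y)\big)=\frac{d_X(x,y)}{r(X)\sqrt{m(m+1)}}.$$
   Context: Let $\bar a=\frac1n\sum_{i=1}^n a_i$ be the mean of $X$, $\mathrm{diam}(X)=\max_{i,j}\lVert a_i-a_j\rVert$, and $r(X)=\mathrm{diam}(X)/2$. Let $R_m$ be the $(m+1)\times(m+1)$ orthogonal matrix with entries: for $i,j\in\{1,\dots,m\}$, $(R_m)_{ii}=\frac{1+(m-1)\sqrt{m+1}}{m\sqrt{m+1}}$ and $(R_m)_{ij}=\frac{1-\sqrt{m+1}}{m\sqrt{m+1}}$ for $i\ne j$; $(R_m)_{m+1,j}=-\frac{1}{\sqrt{m+1}}$ for $j\in\{1,\dots,m\}$; and $(R_m)_{i,m+1}=\frac{1}{\sqrt{m+1}}$ for all $i\in\{1,\dots,m+1\}$. The uniform transformation $\mathcal{T}_X:\mathbb{R}^m\to\mathbb{R}^{m+1}$ associated with $X$ is $$\mathcal{T}_X(x)=\frac{1}{r(X)\sqrt{m(m+1)}}\,R_m\begin{bmatrix}x-\bar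 a\\0\end{bmatrix}+\frac{1}{m+1}\mathbf{1}_{m+1},$$ where $\mathbf{1}_{m+1}$ is the all-ones vector (this maps $X$ into the probability simplex $\Delta^m=\{p\in\mathbb{R}^{m+1}:p_j\ge0,\ \sum_j p_j=1\}$). $|1\rangle,\dots,|m+1\rangle$ is the standard basis of $\mathbb{C}^{m+1}$, $\mathcal{S}(\mathbb{C}^{m+1})$ the set of density matrices, and $d_{\mathrm{HS}}(\rho,\sigma)=\sqrt{\mathrm{Tr}[(\rho-\sigma)^\dagger(\rho-\sigma)]}$ is the Hilbert--Schmidt distance. *)

(* Defs.v *)
From HB Require Import structures.
From mathcomp Require Import all_boot all_order all_algebra.
From mathcomp Require Import complex.
Set Implicit Arguments. Unset Strict Implicit. Unset Printing Implicit Defensive.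
Import Order.TTheory GRing.Theory Num.Theory.
Local Open Scope ring_scope.

Definition enorm (R : rcfType) (m : nat) (v : 'rV[R]_m) : R :=
  Num.sqrt (\sum_(k < m) v 0 k ^+ 2).
Definition edist (R : rcfType) (m : nat) (x y : 'rV[R]_m) : R := enorm (x - y).

(* Point cloud X = {a_0, ..., a_{n-1}} given by an indexing a : 'I_n -> R^m. *)
Definition pc_mean (R : rcfType) (m n : nat) (a : 'I_n -> 'rV[R]_m) : 'rV[R]_m :=
  (n%:R)^-1 *: \sum_(i < n) a i.
Definition pc_diam (R : rcfType) (m n : nat) (a : 'I_n -> 'rV[R]_m) : R :=
  \big[Num.max/0]_(i < n) \big[Num.max/0]_(j < n) edist (a i) (a j).
Definition pc_r (R : rcfType) (m n : nat) (a : 'I_n -> 'rV[R]_m) : R :=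
  pc_diam a / 2.

(* The (m+1)x(m+1) matrix R_m; index ord_max is the (m+1)-th row/column. *)
Definition Rmat (R : rcfType) (m : nat) : 'M[R]_(m.+1) :=
  \matrix_(i < m.+1, j < m.+1)
    if j == ord_max then (Num.sqrt (m.+1)%:R)^-1
    else if i == ord_max then - (Num.sqrt (m.+1)%:R)^-1
    else if i == j then (1 + (m%:R - 1) * Num.sqrt (m.+1)%:R)
                        / (m%:R * Num.sqrt (m.+1)%:R)
    else (1 - Num.sqrt (m.+1)%:R) / (m%:R * Num.sqrt (m.+1)%:R).

Definition ext0 (R : rcfType) (m : nat) (v : 'rV[R]_m) : 'cV[R]_(m.+1) :=
  \col_(i < m.+1) (if unlift ord_max i is Some k then v 0 k else 0).

Definition unifT (R : rcfType) (m n : nat) (a : 'I_n -> 'rV[R]_m)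
  (x : 'rV[R]_m) : 'cV[R]_(m.+1) :=
  (pc_r a * Num.sqrt (m * m.+1)%:R)^-1 *: (Rmat R m *m ext0 (x - pc_mean a))
  + ((m.+1)%:R)^-1 *: const_mx 1.

Definition rhoUTD (R : rcfType) (m n : nat) (a : 'I_n -> 'rV[R]_m)
  (x : 'rV[R]_m) : 'M[R[i]]_(m.+1) :=
  \sum_(j < m.+1) ((unifT a x j 0)%:C)%C *: delta_mx j j.

Definition adjmx (C : numClosedFieldType) (k : nat) (A : 'M[C]_k) : 'M[C]_k :=
  map_mx Num.conj A^T.
Definition dHS (C : numClosedFieldType) (k : nat) (A B : 'M[C]_k) : C :=
  sqrtC (\tr (adjmx (A - B) *m (A - B))).

(* Main.v *)
Require Import Defs.
From HB Require Import structures.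
From mathcomp Require Import all_boot all_order all_algebra.
From mathcomp Require Import complex.
From mathcomp Require Import ring lra.
Import Order.TTheory GRing.Theory Num.Theory.
Local Open Scope ring_scope.

Lemma ext0B (R : rcfType) (m : nat) (u v : 'rV[R]_m) : ext0 (u - v) = ext0 u - ext0 v.
Proof.
apply/matrixP => i j; rewrite !mxE; case: (unlift _ i) => [k|]; rewrite ?mxE //.
by rewrite subr0.
Qed.

Lemma Rmat_norm (R : rcfType) (m : nat) (v : 'rV[R]_m) :
  \sum_(l < m.+1) (Rmat R m *m ext0 v) l 0 ^+ 2 = \sum_(k < m) v 0 k ^+ 2.
Proof.
case: m v => [|m] v.
  rewrite big_ord0 big_ord1 !mxE big_ord1 !mxE; case: unlift => [[]//|].
  by rewrite mulr0 expr0n.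
set s : R := Num.sqrt (m.+2)%:R.
have s0 : s != 0 by rewrite sqrtr_eq0 -ltNge ltr0n.
have m0 : (m.+1)%:R != 0 :> R by rewrite pnatr_eq0.
have hs : s ^+ 2 = (m.+2)%:R by rewrite sqr_sqrtr // ler0n.
have nl (k : 'I_m.+1) : (lift ord_max k == ord_max :> 'I_m.+2) = false.
  by rewrite eq_sym (negbTE (neq_lift _ _)).
set al := (1 - s) / ((m.+1)%:R * s).
set S := \sum_(k < m.+1) v 0 k.
have E (l : 'I_m.+2) : (Rmat R m.+1 *m ext0 v) l 0 =
   \sum_(k < m.+1) Rmat R m.+1 l (lift ord_max k) * v 0 k.
  rewrite mxE (bigD1_ord ord_max) //= !mxE unlift_none mulr0 add0r.
  by apply: eq_bigr => k _; rewrite !mxE liftK.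
rewrite (bigD1_ord ord_max) //= E.
have -> : \sum_(k < m.+1) Rmat R m.+1 ord_max (lift ord_max k) * v 0 k = - (s^-1 * S).
  rewrite /S mulr_sumr -sumrN; apply: eq_bigr => k _.
  by rewrite !mxE nl eqxx -/s mulNr.
have Ei (i : 'I_m.+1) : (Rmat R m.+1 *m ext0 v) (lift ord_max i) 0 = al * S + v 0 i.
  rewrite E /S mulr_sumr.
  have -> : \sum_(k < m.+1) Rmat R m.+1 (lift ord_max i) (lift ord_max k) * v 0 k
     = \sum_(k < m.+1) (al * v 0 k + (i == k)%:R * v 0 k).
    apply: eq_bigr => k _; rewrite !mxE !nl -/s.
    rewrite (inj_eq (@lift_inj _ ord_max)).
    case: eqP => _; rewrite /al /=; last by rewrite mul0r addr0.
    by rewrite mul1r; field; rewrite s0 nat1r m0.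
  rewrite big_split /=; congr (_ + _).
  rewrite (bigD1 i) //= eqxx mul1r big1 ?addr0 // => k /negbTE.
  by rewrite eq_sym => ->; rewrite mul0r.
under eq_bigr => i _ do rewrite Ei.
have key : 2%:R * al + (m.+1)%:R * al ^+ 2 + s^-1 ^+ 2 = 0.
  have -> : 2%:R * al + (m.+1)%:R * al ^+ 2 + s^-1 ^+ 2
     = ((m.+2)%:R - s ^+ 2) / ((m.+1)%:R * s ^+ 2).
    by rewrite /al; field; rewrite s0 nat1r m0.
  by rewrite hs subrr mul0r.
have -> : \sum_(i < m.+1) (al * S + v 0 i) ^+ 2 =
   \sum_(i < m.+1) (v 0 i ^+ 2 + (al * S) ^+ 2 + 2%:R * (al * S) * v 0 i).
  by apply: eq_bigr => i _; ring.
rewrite !big_split /= sumr_const card_ord -mulr_sumr -/S.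
rewrite -[RHS]addr0 -(mulr0 (S ^+ 2)) -key.
ring.
Qed.

Lemma diam_ge0 (R : rcfType) (m n : nat) (a : 'I_n -> 'rV[R]_m) : 0 <= pc_diam a.
Proof.
rewrite /pc_diam; apply: (big_ind (fun x : R => 0 <= x)) => //=.
  by move=> p q hp _; rewrite le_max hp.
move=> i _; apply: (big_ind (fun x : R => 0 <= x)) => //=.
  by move=> p q hp _; rewrite le_max hp.
by move=> j _; rewrite /edist /enorm sqrtr_ge0.
Qed.

Lemma hs_diag (R : rcfType) (k : nat) (w : 'cV[R]_k) :
  let D := diag_mx (\row_j ((w j 0)%:C)%C) in
  sqrtC (\tr (adjmx D *m D)) = ((Num.sqrt (\sum_j w j 0 ^+ 2))%:C)%C.
Proof.
move=> D.
have -> : adjmx D = D.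
  apply/matrixP => i j; rewrite /adjmx /D !mxE.
  rewrite eq_sym; case: eqP => [->|_]; rewrite ?mulr0n ?mulr1n ?rmorph0 //.
  by apply: conj_Creal; rewrite complex_real.
rewrite mulmx_diag mxtrace_diag.
have -> : \sum_j (\row_j0 ((\row_j ((w j 0)%:C)%C) 0 j0 * (\row_j ((w j 0)%:C)%C) 0 j0)) 0 j
   = ((\sum_j w j 0 ^+ 2)%:C)%C.
  rewrite rmorph_sum; apply: eq_bigr => j _; rewrite !mxE.
  by rewrite rmorphXn.
rewrite -[X in ((X)%:C)%C](@sqr_sqrtr _ (\sum_j w j 0 ^+ 2)); last first.
  by apply: sumr_ge0 => j _; rewrite sqr_ge0.
by rewrite rmorphXn sqrCK // ler0c sqrtr_ge0.
Qed.

Theorem mainTheorem2 (R : rcfType) (m n : nat) (a : 'I_n -> 'rV[R]_m)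
  (a_inj : injective a) (n_ge2 : (1 < n)%N) (i j : 'I_n) :
  dHS (rhoUTD a (a i)) (rhoUTD a (a j)) =
  ((edist (a i) (a j) / (pc_r a * Num.sqrt (m * m.+1)%:R))%:C)%C.
Proof.
set c := (pc_r a * Num.sqrt (m * m.+1)%:R)^-1.
have c0 : 0 <= c.
  by rewrite invr_ge0 mulr_ge0 ?sqrtr_ge0 // /pc_r divr_ge0 ?diam_ge0.
set w := unifT a (a i) - unifT a (a j).
have W : w = c *: (Rmat R m *m ext0 (a i - a j)).
  rewrite /w /unifT -/c.
  rewrite opprD addrACA subrr addr0 -scalerBr -mulmxBr -ext0B.
  by congr (_ *: (_ *m ext0 _)); rewrite opprB addrA subrK.
have D : rhoUTD a (a i) - rhoUTD a (a j) = diag_mx (\row_j0 ((w j0 0)%:C)%C).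
  rewrite /rhoUTD diag_mx_sum_delta -sumrB; apply: eq_bigr => k _.
  by rewrite !mxE -scalerBl rmorphB.
rewrite /dHS D hs_diag.
congr ((_)%:C)%C.
have -> : \sum_j0 w j0 0 ^+ 2 = c ^+ 2 * \sum_(k < m) (a i - a j) 0 k ^+ 2.
  rewrite -Rmat_norm mulr_sumr; apply: eq_bigr => k _.
  by rewrite W mxE exprMn.
rewrite sqrtrM ?sqr_ge0 // sqrtr_sqr ger0_norm // mulrC.
by [].
Qed.
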